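(* There is a finite set $D$ and an infinite set $\Gamma \subseteq \mathbf{\Phi}_D$ of weighted relations such that $\mathrm{Imp}(\mathrm{wPol}(\Gamma)) \neq \mathrm{wRelClone}(\Gamma)$.
   Context: Let $\overline{\mathbb{Q}}=\mathbb{Q}\cup\{\infty\}$. An $m$-ary weighted relation on a finite set $D$ ($m\ge1$) is a map $\gamma:D^m\to\overline{\mathbb{Q}}$; $\mathbf{\Phi}_D$ denotes the set of all weighted relations on $D$. $\mathrm{Feas}(\gamma)=\{\mathbf{x}\in D^m:\gamma(\mathbf{x})<\infty\}$. $\phi_=$ is the binary equality relation ($0$ if $x=y$, $\infty$ otherwise) and $\phi_\emptyset$ is the unary relation that is $\infty$ everywhere. A weighted relation $\gamma$ of arity $r$ is obtained by addition from $\gamma_1$ (arity $s$) and $\gamma_2$ (arity $t$) if $\gamma(x_1,\dots,x_r)=\gamma_1(y_1,\dots,y_s)+\gamma_2(z_1,\dots,z_t)$ for some fixed choice of the $y_i,z_j$ among $x_1,\dots,x_r$; it is obtained by minimisation from $\gamma'$ of arity $r+s$ if $\gamma(x_1,\dots,x_r)=\min_{(y_1,\dots,y_s)\in D^s}\gamma'(x_1,\dots,x_r,y_1,\dots,y_s)$. A set $\Gamma\subseteq\mathbf{\Phi}_D$ is a weighted relational clone if it contains $\phi_=$ and $\phi_\emptyset$ and is closed under addition, minimisation, scaling by non-negative rational constants (with $0\cdot\infty=\infty$) and addition of rational constants; $\mathrm{wRelClone}(\Gamma)$ is the smallest weighted relational clone containing $\Gamma$. A $k$-ary operation is a map $f:D^k\to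 D$, applied to tuples coordinatewise. $f$ is a polymorphism of $\gamma$ if $f(\mathbf{x}_1,\dots,\mathbf{x}_k)\in\mathrm{Feas}(\gamma)$ whenever all $\mathbf{x}_i\in\mathrm{Feas}(\gamma)$; $\mathrm{Pol}(\Gamma)$ is the set of common polymorphisms of all $\gamma\in\Gamma$. Projections are $e^{(k)}_i(x_1,\dots,x_k)=x_i$. A clone is a set of operations containing all projections and closed under superposition ($f[g_1,\dots,g_k](\mathbf{x})=f(g_1(\mathbf{x}),\dots,g_k(\mathbf{x}))$); $C^{(k)}$ denotes its $k$-ary members. A $k$-ary weighting of a clone $C$ is a function $\omega:C^{(k)}\to\mathbb{Q}$ with $\sum_{f\in C^{(k)}}\omega(f)=0$ and $\omega(f)<0$ only if $f$ is a projection. It is a weighted polymorphism of $\gamma$ ($\gamma$ is improved by $\omega$) if $C\subseteq\mathrm{Pol}(\gamma)$ and for all $\mathbf{x}_1,\dots,\mathbf{x}_k\in\mathrm{Feas}(\gamma)$, $\sum_{f\in C^{(k)}}\omega(f)\gamma(f(\mathbf{x}_1,\dots,\mathbf{x}_k))\le0$. $\mathrm{wPol}(\Gamma)$ is the set of all weightings of the clone $\mathrm{Pol}(\Gamma)$ that are weighted polymorphisms of every $\gamma\in\Gamma$; $\mathrm{Imp}(\Omega)$ is the set of weighted relations in $\mathbf{\Phi}_D$ improved by every $\omega\in\Omega$. *)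

(* Defs.v *)
From mathcomp Require Import all_boot all_order all_algebra.
From mathcomp Require Import boolp classical_sets cardinality.
Set Implicit Arguments. Unset Strict Implicit. Unset Printing Implicit Defensive.
Import Order.TTheory GRing.Theory Num.Theory.
Local Open Scope classical_set_scope.
Local Open Scope ring_scope.

(* Qbar = Q u {oo}; None stands for oo. *)
Definition Qbar := option rat.

Definition qadd (a b : Qbar) : Qbar :=
  match a, b with Some p, Some q => Some (p + q) | _, _ => None end.
Definition qmin (a b : Qbar) : Qbar :=
  match a, b with
  | None, _ => b | _, None => a
  | Some p, Some q => Some (Num.min p q) end.
(* scaling by a non-negative rational, with 0 * oo = oo *)
Definition qscale (c : rat) (a : Qbar) : Qbar :=
  match a with Some p => Some (c * p) | None => None end.

Record wrel (D : finType) := WRel {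
  wr_ar : nat;
  wr_pos : (0 < wr_ar)%N;
  wr_fn :> {ffun wr_ar.-tuple D -> Qbar} }.
Arguments WRel {D wr_ar} wr_pos wr_fn.

Definition feas (D : finType) (g : wrel D) (x : (wr_ar g).-tuple D) : bool :=
  g x != None.

Definition phi_eq (D : finType) : wrel D :=
  @WRel D 2 isT [ffun x : 2.-tuple D =>
    if tnth x ord0 == tnth x ord_max then Some 0 else None].
Definition phi_empty (D : finType) : wrel D :=
  @WRel D 1 isT [ffun _ : 1.-tuple D => None].

Definition reidx (D : finType) r s (x : r.-tuple D) (sigma : 'I_s -> 'I_r)
  : s.-tuple D := [tuple tnth x (sigma i) | i < s].

Definition closed_add (D : finType) (C : set (wrel D)) : Prop :=
  forall (g1 g2 : wrel D) (r : nat) (hr : (0 < r)%N)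
         (sigma : 'I_(wr_ar g1) -> 'I_r) (tau : 'I_(wr_ar g2) -> 'I_r),
    C g1 -> C g2 ->
    C (WRel hr [ffun x : r.-tuple D =>
         qadd (g1 (reidx x sigma)) (g2 (reidx x tau))]).

Definition closed_min (D : finType) (C : set (wrel D)) : Prop :=
  forall (r s : nat) (hr : (0 < r)%N) (hrs : (0 < r + s)%N)
         (g : {ffun (r + s).-tuple D -> Qbar}),
    C (WRel hrs g) ->
    C (WRel hr [ffun x : r.-tuple D =>
         \big[qmin/None]_(y : s.-tuple D) g (cat_tuple x y)]).

Definition closed_scale (D : finType) (C : set (wrel D)) : Prop :=
  forall (g : wrel D) (c : rat), 0 <= c -> C g ->
    C (WRel (wr_pos g) [ffun x => qscale c (g x)]).

Definition closed_addconst (D : finType) (C : set (wrel D)) : Prop :=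
  forall (g : wrel D) (c : rat), C g ->
    C (WRel (wr_pos g) [ffun x => qadd (g x) (Some c)]).

Definition is_wrelclone (D : finType) (C : set (wrel D)) : Prop :=
  [/\ C (phi_eq D), C (phi_empty D), closed_add C,
      closed_min C & (closed_scale C /\ closed_addconst C)].

Definition wRelClone (D : finType) (Gamma : set (wrel D)) : set (wrel D) :=
  fun g => forall C, is_wrelclone C -> Gamma `<=` C -> C g.

Definition op (D : finType) (k : nat) := {ffun k.-tuple D -> D}.

Definition apply_op (D : finType) k m (f : op D k) (xs : k.-tuple (m.-tuple D))
  : m.-tuple D :=
  [tuple f [tuple tnth (tnth xs i) j | i < k] | j < m].

Definition is_pol (D : finType) k (f : op D k) (g : wrel D) : Prop :=
  forall xs : k.-tuple ((wr_ar g).-tuple D),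
    (forall i, feas (tnth xs i)) -> feas (apply_op f xs).

Definition Pol (D : finType) (Gamma : set (wrel D)) : forall k, set (op D k) :=
  fun k f => forall g, Gamma g -> is_pol f g.

Definition is_proj (D : finType) k (f : op D k) : Prop :=
  exists i : 'I_k, forall x, f x = tnth x i.

(* A k-ary weighting of the clone C: a rational function on C^(k);
   it is represented by a function on all k-ary operations that vanishes
   outside C^(k). *)
Record weighting (D : finType) := Weighting {
  w_clone : forall k, set (op D k);
  w_ar : nat;
  w_fn : {ffun op D w_ar -> rat} }.

Definition is_weighting (D : finType) (C : forall k, set (op D k)) (k : nat)
  (w : {ffun op D k -> rat}) : Prop :=
  [/\ (0 < k)%N,
      (forall f, ~ C k f -> w f = 0),
      \sum_(f : op D k | `[< C k f >]) w f = 0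
    & forall f, C k f -> w f < 0 -> is_proj f].

(* omega is a weighted polymorphism of g; on feasible inputs and f in C^(k)
   subset Pol(g), g (f(xs)) is finite, so odflt 0 only reads finite values. *)
Definition improves (D : finType) (C : forall k, set (op D k)) (k : nat)
  (w : {ffun op D k -> rat}) (g : wrel D) : Prop :=
  (forall k' (f : op D k'), (0 < k')%N -> C k' f -> is_pol f g) /\
  forall xs : k.-tuple ((wr_ar g).-tuple D),
    (forall i, feas (tnth xs i)) ->
    \sum_(f : op D k | `[< C k f >]) w f * odflt 0 (g (apply_op f xs)) <= 0.

Definition wPol (D : finType) (Gamma : set (wrel D)) : set (weighting D) :=
  fun om => [/\ w_clone om = Pol Gamma,
               is_weighting (Pol Gamma) (w_fn om)
             & forall g, Gamma g -> improves (Pol Gamma) (w_fn om) g].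

Definition Imp (D : finType) (Om : set (weighting D)) : set (wrel D) :=
  fun g => forall om, Om om -> improves (w_clone om) (w_fn om) g.

(* Main.v *)
Require Import Defs.
From mathcomp Require Import all_boot all_order all_algebra.
From mathcomp Require Import boolp classical_sets cardinality.
From mathcomp Require Import ring lra.
Set Implicit Arguments. Unset Strict Implicit. Unset Printing Implicit Defensive.
Import Order.TTheory GRing.Theory Num.Theory.
Local Open Scope classical_set_scope.
Local Open Scope ring_scope.

Definition i0 : 'I_3 := ord0.
Definition i1 : 'I_3 := @Ordinal 3 1 isT.
Definition i2 : 'I_3 := ord_max.
Definition gv (t : 'I_3) : rat := if t == i2 then 1 else 0.
Definition hv (t : 'I_3) : rat := if t == i1 then 1 else 0.
Definition gam (n : nat) : wrel 'I_3 :=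
  @WRel 'I_3 1 isT [ffun x : 1.-tuple 'I_3 =>
    Some (n.+1%:R * gv (tnth x ord0) + hv (tnth x ord0))].
Definition gg : wrel 'I_3 :=
  @WRel 'I_3 1 isT [ffun x : 1.-tuple 'I_3 => Some (gv (tnth x ord0))].
Definition f1 (t : 'I_3) : 'I_3 := if t == i0 then i0 else i2.
Definition f2 (t : 'I_3) : 'I_3 := i0.

Definition Q (a : rat) (g : wrel 'I_3) : Prop :=
  forall x : (wr_ar g).-tuple 'I_3, g x != None ->
    [/\ g (map_tuple f1 x) != None, g (map_tuple f2 x) != None &
        a * odflt 0 (g (map_tuple f1 x)) + (1 - a) * odflt 0 (g (map_tuple f2 x))
          <= odflt 0 (g x)].

Definition P (g : wrel 'I_3) : Prop :=
  exists e : rat, [/\ 0 < e, e <= 1 & forall a, 0 <= a -> a <= e -> Q a g].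

Lemma reidx_map (T : finType) r s (x : r.-tuple T) (sigma : 'I_s -> 'I_r) (f : T -> T) :
  reidx (map_tuple f x) sigma = map_tuple f (reidx x sigma).
Proof. apply: eq_from_tnth => i; by rewrite /reidx !tnth_map !tnth_ord_tuple. Qed.

Lemma cat_map (T : finType) r s (x : r.-tuple T) (y : s.-tuple T) (f : T -> T) :
  map_tuple f (cat_tuple x y) = cat_tuple (map_tuple f x) (map_tuple f y).
Proof. by apply: val_inj; rewrite /= map_cat. Qed.

Lemma bigmin_some (T : eqType) (s : seq T) (F : T -> Qbar) m :
  \big[qmin/None]_(y <- s) F y = Some m -> exists y, F y = Some m.
Proof.
elim: s m => [|z s IH] m; first by rewrite big_nil.
rewrite big_cons; case Fz: (F z) => [p|]; case R: (\big[qmin/None]_(y <- s) F y) => [q|] //=.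
- move=> [<-]; case: (leP p q) => h.
  + by exists z.
  + by apply: (IH q).
- by move=> [<-]; exists z.
- by move=> Rm; apply: (IH m); rewrite R.
Qed.

Lemma bigmin_le (T : eqType) (s : seq T) (F : T -> Qbar) y u :
  y \in s -> F y = Some u ->
  exists m, \big[qmin/None]_(y <- s) F y = Some m /\ m <= u.
Proof.
elim: s => [|z s IH] //; rewrite in_cons big_cons => /orP [/eqP <-|ys] Fy.
- rewrite Fy; case: (\big[qmin/None]_(y0 <- s) F y0) => [q|] /=.
  + by exists (Num.min u q); rewrite ge_min lexx.
  + by exists u.
- have [m [-> mu]] := IH ys Fy.
  case: (F z) => [p|] /=.
  + by exists (Num.min p m); rewrite ge_min mu orbT.
  + by exists m.
Qed.

Lemma P_eq : P (phi_eq 'I_3).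
Proof.
exists 1; split => // a a0 a1 x /=; rewrite !ffunE !tnth_map.
case E: (tnth x ord0 == tnth x ord_max) => //= _; rewrite (eqP E) !eqxx /=; split => //.
by rewrite !mulr0 addr0.
Qed.

Lemma P_empty : P (phi_empty 'I_3).
Proof. by exists 1; split => // a a0 a1 x /=; rewrite ffunE. Qed.

Lemma P_add : closed_add P.
Proof.
move=> g1 g2 r hr sigma tau [e1 [e10 e11 H1]] [e2 [e20 e21 H2]].
exists (Num.min e1 e2); split.
- by rewrite lt_min e10 e20.
- by rewrite ge_min e11.
move=> a a0 ae x /=; rewrite !ffunE !reidx_map.
have ae1 : a <= e1 by apply: le_trans ae _; rewrite ge_min lexx.
have ae2 : a <= e2 by apply: le_trans ae _; rewrite ge_min lexx orbT.
case E1: (g1 (reidx x sigma)) => [p1|] //; case E2: (g2 (reidx x tau)) => [p2|] //= _.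
have [] := H1 a a0 ae1 (reidx x sigma); first by rewrite E1.
have [] := H2 a a0 ae2 (reidx x tau); first by rewrite E2.
case: (g1 (map_tuple f1 _)) => [q11|] //; case: (g1 (map_tuple f2 _)) => [q12|] //.
case: (g2 (map_tuple f1 _)) => [q21|] //; case: (g2 (map_tuple f2 _)) => [q22|] //=.
rewrite E1 E2 /= => _ _ h2 _ _ h1; split => //.
have -> : a * (q11 + q21) + (1 - a) * (q12 + q22) =
  (a * q11 + (1 - a) * q12) + (a * q21 + (1 - a) * q22) by ring.
exact: lerD.
Qed.

Lemma P_min : closed_min P.
Proof.
move=> r s hr hrs g [e [e0 e1 H]]; exists e; split => // a a0 ae x /=.
have a1 : 1 - a >= 0 by rewrite subr_ge0 (le_trans ae e1).
rewrite !ffunE.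
case B: (\big[qmin/None]_(y : s.-tuple 'I_3) g (cat_tuple x y)) => [v|] // _.
have [y Ey] := bigmin_some B.
have [] := H a a0 ae (cat_tuple x y); first by rewrite /= Ey.
rewrite /= !cat_map Ey /=.
case E1: (g (cat_tuple (map_tuple f1 x) (map_tuple f1 y))) => [u1|] //.
case E2: (g (cat_tuple (map_tuple f2 x) (map_tuple f2 y))) => [u2|] //= _ _ h.
have [m1 [-> m1u]] := bigmin_le (F := fun y => g (cat_tuple (map_tuple f1 x) y)) (mem_index_enum (map_tuple f1 y)) E1.
have [m2 [-> m2u]] := bigmin_le (F := fun y => g (cat_tuple (map_tuple f2 x) y)) (mem_index_enum (map_tuple f2 y)) E2.
split => //=; apply: le_trans h.
by apply: lerD; [apply: ler_wpM2l|apply: ler_wpM2l].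
Qed.

Lemma P_scale : closed_scale P.
Proof.
move=> g c c0 [e [e0 e1 H]]; exists e; split => // a a0 ae x /=; rewrite !ffunE.
case E: (g x) => [p|] // _.
have [] := H a a0 ae x; first by rewrite E.
case: (g (map_tuple f1 x)) => [q1|] //; case: (g (map_tuple f2 x)) => [q2|] //= _ _.
rewrite E /= => h; split => //.
have -> : a * (c * q1) + (1 - a) * (c * q2) = c * (a * q1 + (1 - a) * q2) by ring.
exact: ler_wpM2l.
Qed.

Lemma P_addconst : closed_addconst P.
Proof.
move=> g c [e [e0 e1 H]]; exists e; split => // a a0 ae x /=; rewrite !ffunE.
case E: (g x) => [p|] // _.
have [] := H a a0 ae x; first by rewrite E.
case: (g (map_tuple f1 x)) => [q1|] //; case: (g (map_tuple f2 x)) => [q2|] //= _ _.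
rewrite E /= => h; split => //.
have -> : a * (q1 + c) + (1 - a) * (q2 + c) = (a * q1 + (1 - a) * q2) + c by ring.
by rewrite lerD2r.
Qed.

Lemma P_clone : is_wrelclone P.
Proof.
split; [exact: P_eq|exact: P_empty|exact: P_add|exact: P_min|].
split; [exact: P_scale|exact: P_addconst].
Qed.

Lemma P_gam n : P (gam n).
Proof.
have N0 : 0 < (n.+1%:R : rat) by rewrite ltr0n.
exists (n.+1%:R)^-1; split.
- by rewrite invr_gt0.
- by rewrite invf_le1 // ler1n.
move=> a a0 ae x /=; rewrite !ffunE /= !tnth_map; split => //=.
have aN : a * n.+1%:R <= 1.
  by rewrite -[X in _ <= X](mulVf (lt0r_neq0 N0)) ler_pM2r.
have a1 : a <= 1 by apply: le_trans ae _; rewrite invf_le1 // ler1n.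
case: (tnth x ord0) => [[|[|[|//]]] ?]; rewrite /f1 /f2 /gv /hv /=;
  rewrite ?mulr0 ?mulr1 ?addr0 ?add0r ?mul0r ?mulr0 //.
by rewrite -[X in _ <= X]mul1r ler_pM2r.
Qed.

Lemma not_P_gg : ~ P gg.
Proof.
move=> [e [e0 e1 H]].
have := H e (ltW e0) (lexx e) [tuple i1]; rewrite /= !ffunE => /(_ isT) [_ _].
have -> : tnth (map_tuple f1 [tuple i1]) ord0 = i2 by [].
have -> : tnth (map_tuple f2 [tuple i1]) ord0 = i0 by [].
have -> : tnth [tuple i1] ord0 = i1 by [].
by rewrite /f1 /f2 /gv /= mulr1 mulr0 addr0 leNgt e0.
Qed.

Lemma gam_inj : injective gam.
Proof.
move=> n m H.
have := congr1 (fun g : wrel 'I_3 => g (nseq_tuple (wr_ar g) i2)) H.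
rewrite /= !ffunE !tnth_nseq /gv /hv /= !mulr1 !addr0 => -[] /eqP.
by rewrite eqr_nat eqSS => /eqP.
Qed.

Theorem lemma1 :
  exists (D : finType) (Gamma : set (wrel D)),
    ~ finite_set Gamma /\ Imp (wPol Gamma) <> wRelClone Gamma.
Proof.
exists ('I_3 : finType), (range gam); split.
  move=> fin; apply: infinite_nat.
  have E : (gam @` setT #= [set: nat])%card by apply: inj_card_eq => x y _ _; apply: gam_inj.
  have [_ H] := (card_eqPle _ _).1 E.
  exact: card_le_finite H fin.
have Igg : Imp (wPol (range gam)) gg.
  move=> om [Hcl Hw Himp]; rewrite Hcl; split.
    by move=> k f _ _ xs _; rewrite /feas /= ffunE.
  move=> xs _.
  set A := \sum_(f | _) _.
  set B := \sum_(f : op 'I_3 (w_ar om) | `[< Pol (range gam) f >])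
     w_fn om f * hv (tnth (apply_op f xs) ord0).
  have Hn : forall n : nat, n.+1%:R * A + B <= 0.
    move=> n; have [_ H] := Himp (gam n) (ex_intro2 _ _ n I erefl).
    have h : \sum_(f | `[< Pol (range gam) f >])
       w_fn om f * odflt 0 (gam n (apply_op f xs)) <= 0.
      by apply: H => i; rewrite /feas ffunE.
    apply: le_trans h; rewrite le_eqVlt; apply/orP; left; apply/eqP.
    rewrite /A /B mulr_sumr -big_split; apply: eq_bigr => f _; rewrite !ffunE /=; ring.
  rewrite leNgt; apply/negP => A0.
  set k := Num.Def.archi_bound (`|B| / A).
  have hk := archi_boundP (divr_ge0 (normr_ge0 B) (ltW A0)).
  rewrite -/k ltr_pdivrMr // in hk.
  have hk' : `|B| < k.+1%:R * A.
    apply: lt_le_trans hk _; apply: ler_wpM2r; first exact: ltW.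
    by rewrite ler_nat.
  have := Hn k; have := ler_norm (- B); rewrite normrN => hB.
  lra.
move=> Eq; apply: not_P_gg.
have : wRelClone (range gam) gg by rewrite -Eq.
apply => //; first exact: P_clone.
by move=> g [n _ <-]; apply: P_gam.
Qed.
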